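(* Let $(X,d)$ be a proper metric space and $o\in X$ a point. Then $(\mathrm{CBI}(X),D_o)$ is a compact metric space, and the subset $\mathrm{RCBI}(X)\subset\mathrm{CBI}(X)$ of all reversible conical bicombings on $X$ is closed.
   Context: A bicombing on $(X,d)$ is a map $\sigma\colon X\times X\times[0,1]\to X$ such that each $\sigma_{xy}:=\sigma(x,y,\cdot)$ is a geodesic from $x$ to $y$ ($\sigma_{xy}(0)=x$, $\sigma_{xy}(1)=y$, $d(\sigma_{xy}(s),\sigma_{xy}(t))=|s-t|d(x,y)$); it is conical if $d(\sigma_{xy}(t),\sigma_{x'y'}(t))\le(1-t)d(x,x')+t\,d(y,y')$ for all $x,y,x',y'\in X$, $t\in[0,1]$, and reversible if $\sigma_{xy}(t)=\sigma_{yx}(1-t)$. $\mathrm{CBI}(X)$ denotes the set of all conical bicombings on $X$. For a point $o\in X$, $D_o(\sigma,\tau):=\sup\{3^{-k}d(\sigma_{xy}(t),\tau_{xy}(t)) : k\ge 0,\ x,y\in B_{2^k}(o),\ t\in[0,1]\}$ for $\sigma,\tau\in\mathrm{CBI}(X)$, where $B_r(o)$ is the ball of radius $r$ about $o$; this is a metric on $\mathrm{CBI}(X)$. A metric space is proper if closed bounded sets are compact. *)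

(* Defs.v *)
From Stdlib Require Import Reals List Lra.
From Coquelicot Require Import Coquelicot.
Open Scope R_scope.

Definition is_metric {T : Type} (e : T -> T -> R) : Prop :=
  (forall x y, 0 <= e x y) /\
  (forall x y, e x y = 0 <-> x = y) /\
  (forall x y, e x y = e y x) /\
  (forall x y z, e x z <= e x y + e y z).

Definition open_in {T : Type} (e : T -> T -> R) (U : T -> Prop) : Prop :=
  forall x, U x -> exists r, 0 < r /\ forall y, e x y < r -> U y.

Definition closed_in {T : Type} (e : T -> T -> R) (A : T -> Prop) : Prop :=
  open_in e (fun x => ~ A x).

Definition compact_in {T : Type} (e : T -> T -> R) (A : T -> Prop) : Prop :=
  forall (I : Type) (U : I -> T -> Prop),
    (forall i, open_in e (U i)) ->
    (forall x, A x -> exists i, U i x) ->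
    exists l : list I, forall x, A x -> exists i, In i l /\ U i x.

Definition bounded_in {T : Type} (e : T -> T -> R) (A : T -> Prop) : Prop :=
  exists x0 r, forall x, A x -> e x0 x <= r.

Definition proper_space {T : Type} (e : T -> T -> R) : Prop :=
  forall A, closed_in e A -> bounded_in e A -> compact_in e A.

Definition I01 : Type := {t : R | 0 <= t <= 1}.

Lemma I0_pf : 0 <= 0 <= 1. Proof. split; [apply Rle_refl | apply Rle_0_1]. Qed.
Lemma I1_pf : 0 <= 1 <= 1. Proof. split; [apply Rle_0_1 | apply Rle_refl]. Qed.
Definition I0 : I01 := exist _ 0 I0_pf.
Definition I1 : I01 := exist _ 1 I1_pf.

Lemma Iflip_pf (t : I01) : 0 <= 1 - proj1_sig t <= 1.
Proof. destruct t as [t [h0 h1]]; simpl; split; lra. Qed.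
Definition Iflip (t : I01) : I01 := exist _ (1 - proj1_sig t) (Iflip_pf t).

(** A map sigma : X x X x [0,1] -> X, written sigma x y t = sigma_xy(t). *)
Definition bimap (X : Type) : Type := X -> X -> I01 -> X.

Definition is_bicombing {X : Type} (d : X -> X -> R) (s : bimap X) : Prop :=
  forall x y,
    s x y I0 = x /\ s x y I1 = y /\
    forall u v : I01,
      d (s x y u) (s x y v) = Rabs (proj1_sig u - proj1_sig v) * d x y.

Definition is_conical {X : Type} (d : X -> X -> R) (s : bimap X) : Prop :=
  forall x y x' y' (t : I01),
    d (s x y t) (s x' y' t) <= (1 - proj1_sig t) * d x x' + proj1_sig t * d y y'.

Definition is_reversible {X : Type} (s : bimap X) : Prop :=
  forall x y (t : I01), s x y t = s y x (Iflip t).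

Definition CBI {X : Type} (d : X -> X -> R) : Type :=
  {s : bimap X | is_bicombing d s /\ is_conical d s}.

Definition RCBI {X : Type} (d : X -> X -> R) : CBI d -> Prop :=
  fun s => is_reversible (proj1_sig s).

Definition ball_cl {X : Type} (d : X -> X -> R) (o : X) (r : R) (x : X) : Prop :=
  d o x <= r.

Definition D_o {X : Type} (d : X -> X -> R) (o : X) (s t : CBI d) : R :=
  real (Lub_Rbar (fun r => exists (k : nat) (x y : X) (u : I01),
     ball_cl d o (2 ^ k) x /\ ball_cl d o (2 ^ k) y /\
     r = / (3 ^ k) * d (proj1_sig s x y u) (proj1_sig t x y u))).

(* Main.v *)
Require Import Defs.
From Stdlib Require Import Reals.
Open Scope R_scope.
From Stdlib Require Import Lra Lia Arith List Classical ClassicalEpsilon FunctionalExtensionality ProofIrrelevance.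
From Coquelicot Require Import Coquelicot.
From mathcomp Require filter classical_sets.

Module UF.
Import mathcomp.classical.classical_sets mathcomp.classical.filter.
Lemma ultra_ext (T : Type) (F : (T -> Prop) -> Prop) :
  F (fun _ => True) ->
  (forall A B, F A -> F B -> F (fun x => A x /\ B x)) ->
  (forall A B : T -> Prop, (forall x, A x -> B x) -> F A -> F B) ->
  ~ F (fun _ => False) ->
  exists G : (T -> Prop) -> Prop,
    G (fun _ => True) /\
    (forall A B, G A -> G B -> G (fun x => A x /\ B x)) /\
    (forall A B : T -> Prop, (forall x, A x -> B x) -> G A -> G B) /\
    ~ G (fun _ => False) /\
    (forall A, F A -> G A) /\
    (forall A, G A \/ G (fun x => ~ A x)).
Proof.
intros hT hI hS h0.
assert (PF : ProperFilter F).
{ constructor. exact h0. constructor. exact hT.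
  intros A B; exact (hI A B).
  intros P Q hPQ; apply hS; exact hPQ. }
destruct (ultraFilterLemma PF) as [G [GU FG]].
exists G.
pose proof (@ultra_proper _ _ GU) as GP.
pose proof (@filter_filter _ _ GP) as GF.
split; [exact (@filterT _ _ GF)|].
split; [intros A B; exact (@filterI _ _ GF A B)|].
split; [intros A B h; exact (@filterS _ _ GF A B h)|].
split; [exact (@filter_not_empty _ G GP)|].
split; [exact FG|].
intros A; exact (in_ultra_setVsetC A GU).
Qed.
End UF.

Section Main.
Variable X : Type.
Variable d : X -> X -> R.
Variable o : X.
Hypothesis hm : is_metric d.

Lemma dpos x y : 0 <= d x y. Proof. apply (proj1 hm). Qed.
Lemma dsym x y : d x y = d y x. Proof. apply (proj1 (proj2 (proj2 hm))). Qed.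
Lemma dtri x y z : d x z <= d x y + d y z. Proof. apply (proj2 (proj2 (proj2 hm))). Qed.
Lemma dxx x : d x x = 0. Proof. apply (proj1 (proj2 hm)); reflexivity. Qed.
Lemma d0eq x y : d x y = 0 -> x = y. Proof. apply (proj1 (proj2 hm)). Qed.

Lemma bc_from s : is_bicombing d s -> forall x y u, d x (s x y u) = proj1_sig u * d x y.
Proof.
  intros hb x y u. destruct (hb x y) as [h0 [h1 h2]].
  transitivity (d (s x y I0) (s x y u)). rewrite h0; reflexivity.
  rewrite h2. destruct u as [u [hu0 hu1]]; simpl.
  rewrite Rabs_left1 by lra. ring.
Qed.

Lemma equi s : is_bicombing d s -> is_conical d s -> forall x y x' y' u u',
  d (s x y u) (s x' y' u') <= Rabs (proj1_sig u - proj1_sig u') * d x y + d x x' + d y y'.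
Proof.
  intros hb hc x y x' y' u u'.
  eapply Rle_trans. apply (dtri _ (s x y u')).
  destruct (hb x y) as [_ [_ h2]]. rewrite h2.
  pose proof (hc x y x' y' u') as hc'. pose proof (proj2_sig u') as hu'. simpl in hu'.
  pose proof (dpos x x'); pose proof (dpos y y').
  pose proof (Rabs_pos (proj1_sig u - proj1_sig u')). pose proof (dpos x y). nra.
Qed.

Lemma cbi_bc (s : CBI d) : is_bicombing d (proj1_sig s).
Proof. exact (proj1 (proj2_sig s)). Qed.
Lemma cbi_con (s : CBI d) : is_conical d (proj1_sig s).
Proof. exact (proj2 (proj2_sig s)). Qed.

Lemma cbi_ball (s : CBI d) x y u : d o (proj1_sig s x y u) <= d o x + d x y.
Proof.
  eapply Rle_trans. apply (dtri _ x). rewrite bc_from by apply cbi_bc.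
  destruct u as [u [hu0 hu1]]; simpl. pose proof (dpos x y). nra.
Qed.

Definition Ev (s t : CBI d) (k : nat) x y u :=
  / 3 ^ k * d (proj1_sig s x y u) (proj1_sig t x y u).

Lemma pow23 k : (2/3)^k = 2^k * / 3^k.
Proof. unfold Rdiv. rewrite Rpow_mult_distr, pow_inv. reflexivity. Qed.

Lemma pow23_le1 k : (2/3)^k <= 1.
Proof. induction k; simpl. lra. pose proof (pow_le (2/3) k). nra. Qed.

Lemma ev_bound s t k x y u : ball_cl d o (2^k) x -> ball_cl d o (2^k) y ->
  0 <= Ev s t k x y u <= 4 * (2/3)^k.
Proof.
  unfold ball_cl, Ev. intros hx hy.
  assert (h3 : 0 < / 3 ^ k) by (apply Rinv_0_lt_compat, pow_lt; lra).
  split. apply Rmult_le_pos. lra. apply dpos.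
  rewrite pow23.
  assert (d (proj1_sig s x y u) (proj1_sig t x y u) <= 4 * 2^k).
  { eapply Rle_trans. apply (dtri _ x).
    rewrite dsym, !bc_from by apply cbi_bc.
    pose proof (dtri x o y). rewrite (dsym x o) in H.
    destruct u as [u [hu0 hu1]]; simpl. pose proof (dpos x y). nra. }
  nra.
Qed.

Lemma lub_facts (E : R -> Prop) (r0 M : R) : E r0 -> (forall r, E r -> r <= M) ->
  (forall r, E r -> r <= real (Lub_Rbar E)) /\
  (forall M', (forall r, E r -> r <= M') -> real (Lub_Rbar E) <= M').
Proof.
  intros h0 hM. destruct (Lub_Rbar_correct E) as [ub lub].
  destruct (Lub_Rbar E) as [l| |] eqn:e.
  - split. intros r hr. exact (ub r hr).
    intros M' hM'. exact (lub (Finite M') hM').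
  - exfalso. exact (lub (Finite M) hM).
  - exfalso. exact (ub r0 h0).
Qed.

Lemma D_facts (s t : CBI d) :
  (forall k x y u, ball_cl d o (2^k) x -> ball_cl d o (2^k) y -> Ev s t k x y u <= D_o d o s t) /\
  (forall M', (forall k x y u, ball_cl d o (2^k) x -> ball_cl d o (2^k) y -> Ev s t k x y u <= M') ->
     D_o d o s t <= M').
Proof.
  assert (hb0 : ball_cl d o (2^0) o) by (unfold ball_cl; rewrite dxx; simpl; lra).
  destruct (lub_facts (fun r => exists (k : nat) (x y : X) (u : I01),
     ball_cl d o (2 ^ k) x /\ ball_cl d o (2 ^ k) y /\
     r = / (3 ^ k) * d (proj1_sig s x y u) (proj1_sig t x y u)) (Ev s t 0 o o I0) 4) as [A B].
  - exists 0%nat, o, o, I0. split; [|split]; auto.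
  - intros r [k [x [y [u [hx [hy ->]]]]]].
    pose proof (ev_bound s t k x y u hx hy). pose proof (pow23_le1 k). fold (Ev s t k x y u). lra.
  - split.
    + intros k x y u hx hy. apply A. exists k, x, y, u. auto.
    + intros M' hM'. apply B. intros r [k [x [y [u [hx [hy ->]]]]]]. apply hM'; auto.
Qed.

Lemma D_ub s t k x y u : ball_cl d o (2^k) x -> ball_cl d o (2^k) y -> Ev s t k x y u <= D_o d o s t.
Proof. apply (proj1 (D_facts s t)). Qed.
Lemma D_le s t M' : (forall k x y u, ball_cl d o (2^k) x -> ball_cl d o (2^k) y -> Ev s t k x y u <= M') ->
     D_o d o s t <= M'.
Proof. apply (proj2 (D_facts s t)). Qed.

Lemma nat_le_pow2 n : INR n <= 2 ^ n.
Proof.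
  induction n. simpl; lra. rewrite S_INR. simpl.
  pose proof (pow_R1_Rle 2 n). lra.
Qed.

Lemma ex_k (x y : X) : exists k, ball_cl d o (2^k) x /\ ball_cl d o (2^k) y.
Proof.
  assert (0 <= d o x + d o y) by (pose proof (dpos o x); pose proof (dpos o y); lra).
  destruct (nfloor_ex _ H) as [n hn]. exists (S n).
  pose proof (nat_le_pow2 (S n)). rewrite S_INR in H0.
  unfold ball_cl. pose proof (dpos o x); pose proof (dpos o y). split; lra.
Qed.

Lemma Ev_to_d s t k x y u : ball_cl d o (2^k) x -> ball_cl d o (2^k) y ->
  d (proj1_sig s x y u) (proj1_sig t x y u) <= 3^k * D_o d o s t.
Proof.
  intros hx hy. pose proof (D_ub s t k x y u hx hy). unfold Ev in H.
  assert (h3 : 0 < 3 ^ k) by (apply pow_lt; lra).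
  apply Rmult_le_compat_l with (r := 3^k) in H; [|lra].
  rewrite <- Rmult_assoc in H. rewrite Rinv_r in H. rewrite Rmult_1_l in H; exact H. apply Rgt_not_eq. exact h3.
Qed.

Lemma D_metric : is_metric (D_o d o).
Proof.
  split; [|split; [|split]].
  - intros s t. eapply Rle_trans; [|apply (D_ub s t 0 o o I0)].
    apply (ev_bound s t 0 o o I0); unfold ball_cl; rewrite dxx; simpl; lra.
    unfold ball_cl; rewrite dxx; simpl; lra. unfold ball_cl; rewrite dxx; simpl; lra.
  - intros s t. split.
    + intros h0. destruct s as [s hs], t as [t ht].
      assert (e : s = t).
      { apply functional_extensionality; intro x.
        apply functional_extensionality; intro y.
        apply functional_extensionality; intro u.
        destruct (ex_k x y) as [k [hx hy]].
        pose proof (Ev_to_d (exist _ s hs) (exist _ t ht) k x y u hx hy) as H.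
        rewrite h0 in H. simpl in H. apply d0eq. pose proof (dpos (s x y u) (t x y u)). lra. }
      subst t. f_equal. apply proof_irrelevance.
    + intros e; subst t. apply Rle_antisym.
      * apply D_le. intros. unfold Ev. rewrite dxx. lra.
      * eapply Rle_trans; [|apply (D_ub s s 0 o o I0)].
        unfold Ev; rewrite dxx; lra.
        unfold ball_cl; rewrite dxx; simpl; lra. unfold ball_cl; rewrite dxx; simpl; lra.
  - intros s t. apply Rle_antisym; apply D_le; intros k x y u hx hy;
      unfold Ev; rewrite dsym; apply (D_ub _ _ k x y u hx hy).
  - intros s t r. apply D_le. intros k x y u hx hy.
    pose proof (D_ub s t k x y u hx hy). pose proof (D_ub t r k x y u hx hy).
    unfold Ev in *.
    pose proof (dtri (proj1_sig s x y u) (proj1_sig t x y u) (proj1_sig r x y u)).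
    assert (0 < / 3^k) by (apply Rinv_0_lt_compat, pow_lt; lra).
    nra.
Qed.

Lemma RCBI_closed : closed_in (D_o d o) (RCBI d).
Proof.
  intros s hs. unfold RCBI, is_reversible in hs.
  apply not_all_ex_not in hs as [x hs]. apply not_all_ex_not in hs as [y hs].
  apply not_all_ex_not in hs as [t hs].
  set (eta := d (proj1_sig s x y t) (proj1_sig s y x (Iflip t))).
  assert (heta : 0 < eta).
  { pose proof (dpos (proj1_sig s x y t) (proj1_sig s y x (Iflip t))).
    destruct (Req_dec eta 0) as [e|e]. exfalso; apply hs, d0eq, e. unfold eta in *; lra. }
  destruct (ex_k x y) as [k [hx hy]].
  assert (h3 : 0 < 3 ^ k) by (apply pow_lt; lra).
  exists (eta / (2 * 3^k)). split. apply Rdiv_lt_0_compat; lra.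
  intros r hr hrev. unfold RCBI, is_reversible in hrev.
  pose proof (Ev_to_d s r k x y t hx hy) as A.
  pose proof (Ev_to_d s r k y x (Iflip t) hy hx) as B.
  rewrite <- hrev in B.
  assert (3^k * D_o d o s r < eta / 2).
  { apply Rmult_lt_compat_l with (r := 3^k) in hr; [|lra].
    replace (3 ^ k * (eta / (2 * 3 ^ k))) with (eta/2) in hr by (field; lra). exact hr. }
  pose proof (dtri (proj1_sig s x y t) (proj1_sig r x y t) (proj1_sig s y x (Iflip t))).
  rewrite (dsym (proj1_sig r x y t)) in H0. fold eta in H0. set (Q := 3 ^ k * D_o d o s r) in *. clearbody Q eta. unfold bimap in *. lra.
Qed.
Lemma quad a b a' b' : d a b <= d a a' + d a' b' + d b b' /\ d a' b' <= d a a' + d a b + d b b'.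
Proof.
  pose proof (dtri a a' b). pose proof (dtri a' b' b). pose proof (dtri a' a b').
  pose proof (dtri a b b'). rewrite (dsym b' b) in *. rewrite (dsym a' a) in *. split; lra.
Qed.

Lemma open_ball z r : open_in d (fun w => d z w < r).
Proof. intros w hw. exists (r - d z w). split. lra. intros y hy. pose proof (dtri z w y). lra. Qed.

Lemma closed_ball R0 : closed_in d (fun w => d o w <= R0).
Proof.
  intros w hw. apply Rnot_le_lt in hw. exists (d o w - R0). split. lra.
  intros y hy hy'. pose proof (dtri o y w). rewrite (dsym y w) in H. lra.
Qed.

Hypothesis hp : proper_space d.

Lemma ball_compact R0 : compact_in d (fun w => d o w <= R0).
Proof. apply hp. apply closed_ball. exists o, R0. auto. Qed.

Lemma ball_net R0 del : 0 < del -> exists N : list X,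
  forall x, d o x <= R0 -> exists z, In z N /\ d z x < del.
Proof.
  intros hdel. destruct (ball_compact R0 X (fun z w => d z w < del)) as [N hN].
  intros z; apply open_ball. intros x _. exists x. rewrite dxx; lra.
  exists N. exact hN.
Qed.

Definition clamp (r : R) : I01.
Proof.
  refine (exist _ (Rmax 0 (Rmin 1 r)) _). split. apply Rmax_l.
  apply Rmax_lub. lra. apply Rmin_l.
Defined.

Lemma clamp_val r : 0 <= r <= 1 -> proj1_sig (clamp r) = r.
Proof. intros [h0 h1]. simpl. rewrite Rmin_right by lra. rewrite Rmax_right by lra. reflexivity. Qed.

Section Filt.
Variable G : (CBI d -> Prop) -> Prop.
Hypothesis GT : G (fun _ => True).
Hypothesis GI : forall A B, G A -> G B -> G (fun x => A x /\ B x).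
Hypothesis GS : forall A B : CBI d -> Prop, (forall x, A x -> B x) -> G A -> G B.
Hypothesis G0 : ~ G (fun _ => False).
Hypothesis GU : forall A, G A \/ G (fun x => ~ A x).

Lemma G_ne A : G A -> exists t, A t.
Proof.
  intros h. apply NNPP. intros hn. apply G0. apply (GS A); auto.
  intros t ht; apply hn; exists t; auto.
Qed.

Lemma G_list {Y : Type} (l : list Y) (P : Y -> CBI d -> Prop) :
  (forall a, In a l -> G (P a)) -> G (fun t => forall a, In a l -> P a t).
Proof.
  induction l as [|a l IH]; intros h.
  - apply (GS (fun _ => True)); auto. intros t _ b [].
  - apply (GS (fun t => P a t /\ forall b, In b l -> P b t)).
    intros t [h1 h2] b [<-|hb]; auto.
    apply GI. apply h; left; auto. apply IH. intros b hb; apply h; right; auto.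
Qed.

Lemma step1 x y u : exists z, forall eps, 0 < eps -> G (fun t => d z (proj1_sig t x y u) < eps).
Proof.
  apply NNPP. intros H.
  set (I := {z : X & {eps : R | 0 < eps /\ G (fun t => ~ d z (proj1_sig t x y u) < eps)}}).
  destruct (ball_compact (d o x + d x y) I
     (fun i w => d (projT1 i) w < proj1_sig (projT2 i))) as [l hl].
  - intros i. apply open_ball.
  - intros w _.
    assert (hw : exists eps, 0 < eps /\ ~ G (fun t => d w (proj1_sig t x y u) < eps)).
    { apply NNPP; intros hn. apply H. exists w. intros eps he. apply NNPP; intros hg.
      apply hn. exists eps. auto. }
    destruct hw as [eps [he hg]].
    assert (hg' : G (fun t => ~ d w (proj1_sig t x y u) < eps)).
    { destruct (GU (fun t => d w (proj1_sig t x y u) < eps)); tauto. }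
    exists (existT _ w (exist _ eps (conj he hg'))). simpl. rewrite dxx. exact he.
  - assert (hG : G (fun t => forall i, In i l ->
        ~ d (projT1 i) (proj1_sig t x y u) < proj1_sig (projT2 i))).
    { apply G_list. intros [z [eps [he hg]]] _. simpl. exact hg. }
    apply G_ne in hG as [t ht].
    destruct (hl (proj1_sig t x y u)) as [i [hi hu]]. apply cbi_ball.
    exact (ht i hi hu).
Qed.

Definition Lf : bimap X := fun x y u =>
  proj1_sig (constructive_indefinite_description _ (step1 x y u)).

Lemma LP x y u eps : 0 < eps -> G (fun t => d (Lf x y u) (proj1_sig t x y u) < eps).
Proof.
  intros he. unfold Lf. destruct (constructive_indefinite_description _ _) as [z hz]. simpl. auto.
Qed.

Lemma approx2 x y u x' y' u' eps : 0 < eps -> exists t : CBI d,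
  d (Lf x y u) (proj1_sig t x y u) < eps /\ d (Lf x' y' u') (proj1_sig t x' y' u') < eps.
Proof. intros he. apply G_ne. apply GI; apply LP; auto. Qed.

Lemma L_bc : is_bicombing d Lf.
Proof.
  intros x y. split; [|split].
  - apply d0eq. apply Rle_antisym; [|apply dpos]. apply Rle_plus_epsilon. intros eps he.
    destruct (G_ne _ (LP x y I0 eps he)) as [t ht].
    destruct (cbi_bc t x y) as [h0 _]. rewrite h0 in ht. lra.
  - apply d0eq. apply Rle_antisym; [|apply dpos]. apply Rle_plus_epsilon. intros eps he.
    destruct (G_ne _ (LP x y I1 eps he)) as [t ht].
    destruct (cbi_bc t x y) as [_ [h1 _]]. rewrite h1 in ht. lra.
  - intros u v. apply Rle_antisym; apply Rle_plus_epsilon; intros eps he;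
      destruct (approx2 x y u x y v (eps/2)) as [t [h1 h2]]; try lra;
      destruct (cbi_bc t x y) as [_ [_ h3]]; specialize (h3 u v);
      destruct (quad (Lf x y u) (Lf x y v) (proj1_sig t x y u) (proj1_sig t x y v));
      unfold bimap in *; lra.
Qed.

Lemma L_con : is_conical d Lf.
Proof.
  intros x y x' y' u. apply Rle_plus_epsilon. intros eps he.
  destruct (approx2 x y u x' y' u (eps/2)) as [t [h1 h2]]; try lra.
  pose proof (cbi_con t x y x' y' u).
  destruct (quad (Lf x y u) (Lf x' y' u) (proj1_sig t x y u) (proj1_sig t x' y' u)).
  unfold bimap in *; lra.
Qed.

Definition Lc : CBI d := exist _ Lf (conj L_bc L_con).

Lemma conv eps : 0 < eps -> G (fun t => D_o d o Lc t < eps).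
Proof.
  intros he.
  destruct (pow_lt_1_zero (2/3) ltac:(rewrite Rabs_right; lra) (eps/8) ltac:(lra)) as [K hK].
  set (R0 := 2 ^ K).
  assert (hR0 : 0 < R0) by (apply pow_lt; lra).
  set (del := eps / 20).
  destruct (ball_net R0 del ltac:(unfold del; lra)) as [N hN].
  assert (h16 : 0 <= 16 * R0 / eps) by (apply Rcomplements.Rdiv_le_0_compat; lra).
  destruct (nfloor_ex (16 * R0 / eps) h16) as [M0 hM0].
  set (M := S M0).
  assert (hMpos : 0 < INR M) by (unfold M; rewrite S_INR; pose proof (pos_INR M0); lra).
  assert (hM : 4 * R0 / INR M <= eps / 4).
  { assert (16 * R0 < eps * INR M).
    { unfold M; rewrite S_INR.
      replace (16 * R0) with (eps * (16 * R0 / eps)) by (field; lra). nra. }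
    apply Rmult_le_reg_r with (INR M). lra.
    unfold Rdiv. rewrite Rmult_assoc, Rinv_l by lra. lra. }
  set (tj := fun j : nat => clamp (INR j / INR M)).
  apply (GS (fun t => forall a, In a N -> forall b, In b N -> forall j, In j (seq 0 (S M)) ->
            d (Lf a b (tj j)) (proj1_sig t a b (tj j)) < del)).
  2: { apply G_list; intros a _. apply G_list; intros b _. apply G_list; intros j _.
       apply LP. unfold del; lra. }
  intros t ht.
  apply Rle_lt_trans with (eps/2); [|lra].
  apply D_le. intros k x y u hx hy.
  destruct (le_lt_dec K k) as [hk|hk].
  - pose proof (ev_bound Lc t k x y u hx hy). specialize (hK k hk).
    rewrite Rabs_right in hK by (apply Rle_ge, pow_le; lra). lra.
  - assert (h2k : 2 ^ k <= R0) by (apply Rle_pow; [lra|lia]).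
    unfold ball_cl in hx, hy.
    assert (hxR : d o x <= R0) by lra. assert (hyR : d o y <= R0) by lra.
    destruct (hN x hxR) as [a [ha hax]]. destruct (hN y hyR) as [b [hb hby]].
    pose proof (proj2_sig u) as hu. simpl in hu.
    assert (huM : 0 <= proj1_sig u * INR M) by nra.
    destruct (nfloor_ex _ huM) as [j hj].
    assert (hjM : (j <= M)%nat).
    { apply INR_le. nra. }
    assert (hjv : 0 <= INR j / INR M <= 1).
    { split. apply Rcomplements.Rdiv_le_0_compat. apply pos_INR. lra.
      apply Rmult_le_reg_r with (INR M); [lra|].
      unfold Rdiv; rewrite Rmult_assoc, Rinv_l by lra. pose proof (le_INR _ _ hjM); lra. }
    assert (htj : proj1_sig (tj j) = INR j / INR M) by (apply clamp_val; exact hjv).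
    assert (hdu : Rabs (proj1_sig u - proj1_sig (tj j)) <= 1 / INR M).
    { rewrite htj. 
      assert (proj1_sig u - INR j / INR M = (proj1_sig u * INR M - INR j) / INR M)
        by (field; lra).
      rewrite H. rewrite Rabs_right.
      apply Rmult_le_compat_r. left; apply Rinv_0_lt_compat; lra. lra.
      apply Rle_ge. apply Rcomplements.Rdiv_le_0_compat; lra. }
    assert (hin : In j (seq 0 (S M))) by (apply in_seq; lia).
    specialize (ht a ha b hb j hin).
    pose proof (equi Lf L_bc L_con x y a b u (tj j)) as e1.
    pose proof (equi (proj1_sig t) (cbi_bc t) (cbi_con t) x y a b u (tj j)) as e2.
    pose proof (dtri (Lf x y u) (Lf a b (tj j)) (proj1_sig t x y u)) as t1.
    pose proof (dtri (Lf a b (tj j)) (proj1_sig t a b (tj j)) (proj1_sig t x y u)) as t2.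
    rewrite (dsym (proj1_sig t a b (tj j))) in t2.
    assert (hxy : d x y <= 2 * R0).
    { pose proof (dtri x o y). rewrite (dsym x o) in H. lra. }
    assert (hp1 : Rabs (proj1_sig u - proj1_sig (tj j)) * d x y <= 1 / INR M * (2 * R0)).
    { apply Rmult_le_compat; auto. apply Rabs_pos. apply dpos. }
    assert (hp2 : 1 / INR M * (2 * R0) = 2 * R0 / INR M) by (field; lra).
    assert (hp3 : 2 * R0 / INR M <= eps / 8).
    { replace (2 * R0 / INR M) with (/2 * (4 * R0 / INR M)) by (field; lra). lra. }
    rewrite (dsym x a) in e1, e2. rewrite (dsym y b) in e1, e2.
    assert (h3k : / 3 ^ k <= 1).
    { rewrite <- Rinv_1. apply Rinv_le_contravar. lra. apply pow_R1_Rle. lra. }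
    assert (h3k' : 0 < / 3 ^ k) by (apply Rinv_0_lt_compat, pow_lt; lra).
    unfold Ev. simpl.
    pose proof (dpos (Lf x y u) (proj1_sig t x y u)).
    unfold del in *. unfold bimap in *.
    eapply Rle_trans; [apply Rmult_le_compat_r; [exact H | exact h3k] |].
    rewrite Rmult_1_l. unfold bimap in *. lra.
Qed.

Lemma G_conv_ex : exists s : CBI d, forall eps, 0 < eps -> G (fun t => D_o d o s t < eps).
Proof. exists Lc. apply conv. Qed.

End Filt.

Lemma CBI_compact : compact_in (D_o d o) (fun _ => True).
Proof.
  intros I U hU hcov. apply NNPP. intros hno.
  set (F := fun A : CBI d -> Prop =>
    exists l : list I, forall t, (forall i, In i l -> ~ U i t) -> A t).
  destruct (UF.ultra_ext (CBI d) F) as [G [GT [GI [GS [G0 [FG GU]]]]]].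
  - exists nil. auto.
  - intros A B [l1 h1] [l2 h2]. exists (l1 ++ l2). intros t ht.
    split; [apply h1|apply h2]; intros i hi; apply ht; apply in_or_app; auto.
  - intros A B hAB [l h]. exists l. auto.
  - intros [l h]. apply hno. exists l. intros t _. apply NNPP; intros hn.
    apply (h t). intros i hi hu. apply hn. exists i. auto.
  - assert (hex : exists s : CBI d, forall eps, 0 < eps -> G (fun t => D_o d o s t < eps))
      by (eapply G_conv_ex; eauto).
    destruct hex as [s hs].
    destruct (hcov s Logic.I) as [i hi].
    destruct (hU i s hi) as [r [hr hball]].
    assert (hF : G (fun t => ~ U i t)).
    { apply FG. exists (i :: nil). intros t ht. apply ht. left; auto. }
    assert (hne : exists t, D_o d o s t < r /\ ~ U i t).
    { apply NNPP. intros hn. apply G0. apply (GS (fun t => D_o d o s t < r /\ ~ U i t)).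
      intros t ht. apply hn. exists t; auto. apply GI; auto. }
    destruct hne as [t [h1 h2]]. apply h2. apply hball. exact h1.
Qed.

End Main.

Theorem lemma4p1 (X : Type) (d : X -> X -> R) (o : X) :
  is_metric d -> proper_space d ->
  is_metric (D_o d o) /\
  compact_in (D_o d o) (fun _ : CBI d => True) /\
  closed_in (D_o d o) (RCBI d).
Proof.
  intros hm hp. split; [|split].
  - apply D_metric; auto.
  - apply CBI_compact; auto.
  - apply RCBI_closed; auto.
Qed.
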